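(* Let $d\ge 7$ be an integer, $\omega=\sqrt{d^2-8d+8}$, and let $\phi_n$ ($n\ge 0$) be the normalized eigenfunctions ($\|\phi_n\|=1$) of $A$ with eigenvalues $\lambda_n=-\frac{\gamma}{2}+n$. Then $$\Bigl\|\frac{\phi_n(y)}{y}\Bigr\|\le \frac{4n}{\omega}+1\qquad\text{for all } n\ge 0,$$ where $\|\cdot\|$ is the norm of $\mathcal H$ applied to the function $y\mapsto\phi_n(y)/y$.
   Context: Let $\gamma=\frac12(d-2-\omega)$, $\rho(y)=y^{d-1}e^{-y^2/4}$, $\mathcal H=L^2((0,\infty),\rho\,dy)$ with inner product $\langle f,g\rangle=\int_0^\infty fg\rho\,dy$ and norm $\|\cdot\|$. $\mathcal A\phi=-\frac1\rho(\rho\phi')'-\frac{d-1}{y^2}\phi$ on $C_0^\infty((0,\infty))$, and $A$ is its Friedrichs extension. The normalized eigenfunctions of $A$ are $\phi_n(y)=\mathcal N_n y^{-\gamma}L_n^{(\omega/2)}(y^2/4)$, where $L_n^{(a)}$ is the generalized Laguerre polynomial and $\mathcal N_n>0$ is a normalizing constant. *)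

(* Defs.v *)
From Stdlib Require Import Reals Lra Arith Factorial.
Open Scope R_scope.

Definition omega (d : nat) : R := sqrt (INR d ^ 2 - 8 * INR d + 8).

Definition gam (d : nat) : R := (INR d - 2 - omega d) / 2.

Definition rho (d : nat) (y : R) : R := y ^ (d - 1) * exp (- y ^ 2 / 4).

Fixpoint rising_from (a : R) (k n : nat) : R :=
  match n with
  | O => 1
  | S m => if Nat.leb n k then 1 else rising_from a k m * (a + INR n)
  end.

(* generalized Laguerre polynomial
   L_n^{(a)}(x) = sum_{k=0}^n (-1)^k binom(n+a, n-k) x^k / k!
   with binom(n+a, n-k) = (a+k+1)...(a+n)/(n-k)! *)
Definition laguerre (n : nat) (a x : R) : R :=
  sum_f_R0 (fun k => (-1) ^ k * rising_from a k n / INR (fact (n - k))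
                      / INR (fact k) * x ^ k) n.

Definition phi (d n : nat) (N : R) (y : R) : R :=
  N * Rpower y (- gam d) * laguerre n (omega d / 2) (y ^ 2 / 4).

Definition improper_int_0_inf (f : R -> R) (l : R) : Prop :=
  (forall a b, 0 < a -> a <= b -> inhabited (Riemann_integrable f a b)) /\
  forall eps, 0 < eps -> exists delta, 0 < delta /\ exists M,
    forall a b (pr : Riemann_integrable f a b),
      0 < a -> a < delta -> M < b -> Rabs (RiemannInt pr - l) < eps.

(* squared norm in H = L^2((0,oo), rho dy): ||f||^2 = l *)
Definition Hnorm_sq (d : nat) (f : R -> R) (l : R) : Prop :=
  improper_int_0_inf (fun y => f y ^ 2 * rho d y) l.

(* Main.v *)
Require Import Defs.
From Stdlib Require Import Reals Lra Lia Factorial Classical.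
Open Scope R_scope.

Fixpoint poch (x : R) (m : nat) : R :=
  match m with O => 1 | S k => poch x k * (x + INR k) end.

Lemma poch_add x m k : poch x (m + k) = poch x m * poch (x + INR m) k.
Proof.
  induction k as [|k IH]; simpl.
  - rewrite Nat.add_0_r; ring.
  - rewrite Nat.add_succ_r; simpl. rewrite IH, plus_INR. ring.
Qed.

Lemma poch_diff x k : poch (x+1) (S k) - poch x (S k) = INR (S k) * poch (x+1) k.
Proof.
  induction k as [|k IH].
  - simpl. ring.
  - change (poch (x+1) (S (S k))) with (poch (x+1) (S k) * (x + 1 + INR (S k))).
    change (poch x (S (S k))) with (poch x (S k) * (x + INR (S k))).
    change (poch (x+1) (S k)) with (poch (x+1) k * (x + 1 + INR k)) in *.
    rewrite !S_INR in *. nra.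
Qed.

Lemma sum_swap (f : nat -> nat -> R) n m :
  sum_f_R0 (fun i => sum_f_R0 (fun k => f i k) m) n =
  sum_f_R0 (fun k => sum_f_R0 (fun i => f i k) n) m.
Proof.
  induction n as [|n IH]; simpl.
  - reflexivity.
  - rewrite IH, <- plus_sum. reflexivity.
Qed.

Lemma sum_zero (f : nat -> R) n : (forall i, (i <= n)%nat -> f i = 0) -> sum_f_R0 f n = 0.
Proof.
  intros H. rewrite (sum_eq f (fun _ => 0)) by auto. rewrite sum_cte. ring.
Qed.

Lemma scal_sum_l (A : nat -> R) N x : sum_f_R0 (fun i => x * A i) N = x * sum_f_R0 A N.
Proof. rewrite scal_sum. apply sum_eq; intros; ring. Qed.

Lemma alt_step (f : nat -> R) n :
  sum_f_R0 (fun i => (-1)^i * C (S n) i * f i) (S n) =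
  sum_f_R0 (fun i => (-1)^i * C n i * (f i - f (S i))) n.
Proof.
  destruct n as [|m].
  - simpl. unfold C; simpl. field.
  - rewrite decomp_sum by lia. simpl Init.Nat.pred.
    rewrite tech5.
    rewrite (sum_eq (fun i => (-1) ^ S i * C (S (S m)) (S i) * f (S i))
               (fun i => (-1) ^ S i * C (S m) i * f (S i) + (-1) ^ S i * C (S m) (S i) * f (S i))).
    2:{ intros i Hi. rewrite <- pascal by lia. ring. }
    rewrite plus_sum.
    assert (E : forall i, (-1)^i * C (S m) i * (f i - f (S i)) =
      (-1)^i * C (S m) i * f i + - ((-1)^i * C (S m) i * f (S i))) by (intros; ring).
    rewrite (sum_eq _ _ _ (fun i _ => E i)), plus_sum.
    rewrite (decomp_sum (fun i => (-1) ^ i * C (S m) i * f i)) by lia. simpl Init.Nat.pred.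
    rewrite (tech5 (fun i => - ((-1) ^ i * C (S m) i * f (S i)))).
    rewrite <- (sum_opp_sum _ m) || idtac.
    assert (Hc0 : forall n, C n 0 = 1) by (intros; unfold C; simpl; rewrite Nat.sub_0_r; field; apply INR_fact_neq_0).
    assert (Hcn : forall n, C n n = 1) by (intros; unfold C; rewrite Nat.sub_diag; simpl; field; apply INR_fact_neq_0).
    rewrite !Hc0, !Hcn.
    assert (E2 : sum_f_R0 (fun i => - ((-1) ^ i * C (S m) i * f (S i))) m =
                 sum_f_R0 (fun i => (-1) ^ S i * C (S m) i * f (S i)) m).
    { apply sum_eq; intros; simpl; ring. }
    rewrite E2. simpl. ring.
Qed.

Lemma fd_zero : forall n b k, (k < n)%nat ->
  sum_f_R0 (fun i => (-1)^i * C n i * poch (b + INR i) k) n = 0.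
Proof.
  induction n as [|n IH]; intros b k Hk; [lia|].
  rewrite (alt_step (fun i => poch (b + INR i) k)).
  destruct k as [|k].
  - apply sum_zero; intros; simpl; ring.
  - rewrite (sum_eq _ (fun i => - INR (S k) * ((-1)^i * C n i * poch ((b+1) + INR i) k))).
    2:{ intros i _. cbv beta. rewrite (S_INR i).
        replace (b + (INR i + 1)) with ((b + INR i) + 1) by ring.
        replace (b + 1 + INR i) with ((b + INR i) + 1) by ring.
        pose proof (poch_diff (b + INR i) k) as P.
        replace (poch (b + INR i) (S k) - poch (b + INR i + 1) (S k)) with
          (- (poch (b + INR i + 1) (S k) - poch (b + INR i) (S k))) by ring.
        rewrite P. ring. }
    rewrite scal_sum_l, IH by lia. ring.
Qed.


Lemma rising_poch a k n : (k <= n)%nat -> rising_from a k n * poch a (S k) = poch a (S n).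
Proof.
  induction n as [|m IH]; intros Hk.
  - assert (k = 0%nat) by lia; subst. simpl. ring.
  - change (rising_from a k (S m)) with (if Nat.leb (S m) k then 1 else rising_from a k m * (a + INR (S m))). destruct (Nat.leb (S m) k) eqn:E.
    + apply Nat.leb_le in E. assert (k = S m) by lia. subst. ring.
    + apply Nat.leb_gt in E. 
      change (poch a (S (S m))) with (poch a (S m) * (a + INR (S m))).
      rewrite <- IH by lia. ring.
Qed.

Definition cc (a : R) (n i : nat) : R :=
  (-1) ^ i * rising_from a i n / INR (fact (n - i)) / INR (fact i).

Lemma orth a n k : (k < n)%nat ->
  sum_f_R0 (fun i => cc a n i * poch a (S i + k)) n = 0.
Proof.
  intros Hk.
  rewrite (sum_eq _ (fun i => (poch a (S n) / INR (fact n)) *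
                ((-1)^i * C n i * poch ((a+1) + INR i) k))).
  2:{ intros i Hi. rewrite poch_add.
      replace (a + INR (S i)) with (a + 1 + INR i) by (rewrite (S_INR i); ring).
      rewrite <- (rising_poch a i n Hi). unfold cc, C.
      pose proof (INR_fact_neq_0 n). pose proof (INR_fact_neq_0 i).
      pose proof (INR_fact_neq_0 (n - i)). field. auto. }
  rewrite scal_sum_l, fd_zero by lia. ring.
Qed.

Lemma orth2 a n i : (i <= n)%nat ->
  INR i * sum_f_R0 (fun k => cc a n k * poch a (k + i)) n = 0.
Proof.
  intros Hi. destruct i as [|i].
  - simpl. ring.
  - rewrite (sum_eq _ (fun k => cc a n k * poch a (S k + i))).
    + rewrite orth by lia. ring.
    + intros k _. rewrite Nat.add_succ_r. reflexivity.
Qed.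

Lemma lag_identity a n :
  sum_f_R0 (fun i => sum_f_R0 (fun k => cc a n i * cc a n k * poch a (S (i + k))) n) n =
  a * sum_f_R0 (fun i => sum_f_R0 (fun k => cc a n i * cc a n k * poch a (i + k)) n) n.
Proof.
  assert (E : forall i k, cc a n i * cc a n k * poch a (S (i + k)) =
     a * (cc a n i * cc a n k * poch a (i + k)) +
     (cc a n i * cc a n k * INR i * poch a (i + k) +
      cc a n i * cc a n k * INR k * poch a (i + k))).
  { intros i k. simpl poch. rewrite plus_INR. ring. }
  rewrite (sum_eq _ (fun i => a * sum_f_R0 (fun k => cc a n i * cc a n k * poch a (i + k)) n +
     (sum_f_R0 (fun k => cc a n i * cc a n k * INR i * poch a (i + k)) n +
      sum_f_R0 (fun k => cc a n i * cc a n k * INR k * poch a (i + k)) n))).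
  2:{ intros i _. rewrite <- scal_sum_l, <- !plus_sum. apply sum_eq; intros; apply E. }
  rewrite !plus_sum, scal_sum_l.
  assert (T1 : sum_f_R0 (fun i => sum_f_R0 (fun k => cc a n i * cc a n k * INR i * poch a (i + k)) n) n = 0).
  { apply sum_zero; intros i Hi. rewrite <- (Rmult_0_r (cc a n i)), <- (orth2 a n i Hi).
    rewrite <- !scal_sum_l. apply sum_eq; intros k _. rewrite Nat.add_comm. ring. }
  assert (T2 : sum_f_R0 (fun i => sum_f_R0 (fun k => cc a n i * cc a n k * INR k * poch a (i + k)) n) n = 0).
  { rewrite sum_swap. apply sum_zero; intros k Hk. rewrite <- (Rmult_0_r (cc a n k)), <- (orth2 a n k Hk).
    rewrite <- !scal_sum_l. apply sum_eq; intros i _. ring. }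
  rewrite T1, T2. ring.
Qed.

From Coquelicot Require Import Coquelicot.

Definition impr (f : R -> R) (l : R) : Prop :=
  (forall a b, 0 < a -> a <= b -> ex_RInt f a b) /\
  (forall eps, 0 < eps -> exists delta, 0 < delta /\ exists M,
     forall a b, 0 < a -> a < delta -> M < b -> a <= b -> Rabs (RInt f a b - l) < eps).

Lemma RInt_correct_R (f : R -> R) a b : ex_RInt f a b -> is_RInt f a b (RInt f a b).
Proof. intros H. apply (RInt_correct f a b H). Qed.

Lemma impr_improper f l : impr f l -> improper_int_0_inf f l.
Proof.
  intros [Hi Hl]. split.
  - intros a b Ha Hab. constructor. apply ex_RInt_Reals_0. auto.
  - intros eps Heps. destruct (Hl eps Heps) as [delta [Hd [M HM]]].
    exists (Rmin delta 1). split. { apply Rmin_pos; lra. }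
    exists (Rmax M 1). intros a b pr Ha Had Hb.
    pose proof (Rmin_l delta 1). pose proof (Rmin_r delta 1).
    pose proof (Rmax_l M 1). pose proof (Rmax_r M 1).
    rewrite <- RInt_Reals. apply HM; lra.
Qed.

Lemma improper_impr f l : improper_int_0_inf f l -> impr f l.
Proof.
  intros [Hi Hl]. split.
  - intros a b Ha Hab. destruct (Hi a b Ha Hab) as [pr]. apply ex_RInt_Reals_1, pr.
  - intros eps Heps. destruct (Hl eps Heps) as [delta [Hd [M HM]]].
    exists delta. split; auto. exists M. intros a b Ha Had Hb Hab.
    destruct (Hi a b Ha Hab) as [pr]. rewrite (RInt_Reals _ _ _ pr). apply HM; auto.
Qed.

Lemma impr_unique f l1 l2 : impr f l1 -> impr f l2 -> l1 = l2.
Proof.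
  intros [_ H1] [_ H2].
  destruct (Req_dec l1 l2) as [E|E]; auto. exfalso.
  assert (Hp : 0 < Rabs (l1 - l2) / 4).
  { assert (l1 - l2 <> 0) by lra. pose proof (Rabs_pos_lt _ H). lra. }
  destruct (H1 _ Hp) as [d1 [Hd1 [M1 HM1]]]. destruct (H2 _ Hp) as [d2 [Hd2 [M2 HM2]]].
  set (a := Rmin d1 d2 / 2). set (b := Rmax (Rmax M1 M2) a + 1).
  assert (0 < Rmin d1 d2) by (apply Rmin_pos; lra).
  pose proof (Rmin_l d1 d2). pose proof (Rmin_r d1 d2).
  pose proof (Rmax_l (Rmax M1 M2) a). pose proof (Rmax_r (Rmax M1 M2) a).
  pose proof (Rmax_l M1 M2). pose proof (Rmax_r M1 M2).
  assert (A1 := HM1 a b). assert (A2 := HM2 a b).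
  assert (F1 : 0 < a) by (unfold a; lra).
  assert (F2 : a < d1) by (unfold a; lra).
  assert (F3 : a < d2) by (unfold a; lra).
  assert (F4 : M1 < b) by (unfold b; lra).
  assert (F5 : M2 < b) by (unfold b; lra).
  assert (F6 : a <= b) by (unfold b; lra).
  specialize (A1 F1 F2 F4 F6). specialize (A2 F1 F3 F5 F6).
  set (I := RInt f _ _) in *.
  assert (Rabs (l1 - l2) <= Rabs (I - l1) + Rabs (I - l2)).
  { replace (l1 - l2) with (-(I - l1) + (I - l2)) by ring.
    eapply Rle_trans; [apply Rabs_triang|]. rewrite Rabs_Ropp. lra. }
  lra.
Qed.

Lemma impr_ext f g l : (forall y, 0 < y -> f y = g y) -> impr f l -> impr g l.
Proof.
  intros E [Hi Hl]. 
  assert (Ex : forall a b, 0 < a -> a <= b -> forall x, Rmin a b < x < Rmax a b -> f x = g x).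
  { intros a b Ha Hab x Hx. rewrite Rmin_left in Hx by lra. apply E; lra. }
  split.
  - intros a b Ha Hab. eapply ex_RInt_ext; [apply Ex; eauto|]. auto.
  - intros eps Heps. destruct (Hl eps Heps) as [delta [Hd [M HM]]].
    exists delta. split; auto. exists M. intros a b Ha Had Hb Hab.
    rewrite <- (RInt_ext f g a b (Ex a b Ha Hab)). auto.
Qed.

Lemma impr_plus f g u v : impr f u -> impr g v -> impr (fun y => f y + g y) (u + v).
Proof.
  intros [Hf Lf] [Hg Lg]. split.
  - intros a b Ha Hab. apply (ex_RInt_plus f g); auto.
  - intros eps Heps. destruct (Lf (eps/2)) as [d1 [Hd1 [M1 HM1]]]; [lra|].
    destruct (Lg (eps/2)) as [d2 [Hd2 [M2 HM2]]]; [lra|].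
    exists (Rmin d1 d2). split; [apply Rmin_pos; lra|]. exists (Rmax M1 M2).
    intros a b Ha Had Hb Hab.
    pose proof (Rmin_l d1 d2). pose proof (Rmin_r d1 d2).
    pose proof (Rmax_l M1 M2). pose proof (Rmax_r M1 M2).
    assert (EI : RInt (fun y => f y + g y) a b = RInt f a b + RInt g a b).
    { apply is_RInt_unique. apply (is_RInt_plus f g); apply RInt_correct_R; auto. }
    rewrite EI.
    specialize (HM1 a b Ha ltac:(lra) ltac:(lra) Hab).
    specialize (HM2 a b Ha ltac:(lra) ltac:(lra) Hab).
    replace (RInt f a b + RInt g a b - (u + v)) with ((RInt f a b - u) + (RInt g a b - v)) by ring.
    eapply Rle_lt_trans; [apply Rabs_triang|]. lra.
Qed.

Lemma impr_scal f u c : impr f u -> impr (fun y => c * f y) (c * u).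
Proof.
  intros [Hf Lf]. split.
  - intros a b Ha Hab. apply (ex_RInt_scal f); auto.
  - intros eps Heps. destruct (Lf (eps / (Rabs c + 1))) as [d1 [Hd1 [M1 HM1]]].
    { apply Rdiv_lt_0_compat; [lra|]. pose proof (Rabs_pos c); lra. }
    exists d1. split; auto. exists M1. intros a b Ha Had Hb Hab.
    assert (EI : RInt (fun y => c * f y) a b = c * RInt f a b).
    { apply is_RInt_unique. apply (is_RInt_scal f); apply RInt_correct_R; auto. }
    rewrite EI.
    specialize (HM1 a b Ha Had Hb Hab).
    replace (c * RInt f a b - c * u) with (c * (RInt f a b - u)) by ring.
    rewrite Rabs_mult. pose proof (Rabs_pos c).
    apply Rle_lt_trans with ((Rabs c + 1) * Rabs (RInt f a b - u)).
    { pose proof (Rabs_pos (RInt f a b - u)). nra. }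
    replace eps with ((Rabs c + 1) * (eps / (Rabs c + 1))) by (field; lra).
    apply Rmult_lt_compat_l; lra.
Qed.

Lemma impr_sum (F : nat -> R -> R) (v : nat -> R) m :
  (forall i, (i <= m)%nat -> impr (F i) (v i)) ->
  impr (fun y => sum_f_R0 (fun i => F i y) m) (sum_f_R0 v m).
Proof.
  induction m as [|m IH]; intros H.
  - simpl. apply H; lia.
  - simpl. apply impr_plus; [apply IH; intros; apply H; lia | apply H; lia].
Qed.

Definition G (c y : R) : R := exp (c * ln y - y ^ 2 / 4).

Lemma G_pos c y : 0 < G c y.
Proof. apply exp_pos. Qed.

Lemma G_mul c y : 0 < y -> G c y * y = G (c + 1) y.
Proof.
  intros Hy. unfold G.
  replace ((c + 1) * ln y - y ^ 2 / 4) with ((c * ln y - y ^ 2 / 4) + ln y) by ring.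
  rewrite exp_plus, exp_ln; auto.
Qed.

Lemma G_derive e y : 0 < y -> is_derive (G e) y (e * G (e - 1) y - / 2 * G (e + 1) y).
Proof.
  intros Hy. unfold G. auto_derive. lra.
  set (E := e * ln y - y ^ 2 / 4).
  assert (E1 : e * ln y + - (y * (y * 1) * / 4) = e * ln y - y ^ 2 / 4) by (simpl; field).
  assert (E2 : (e - 1) * ln y - y ^ 2 / 4 = (e * ln y - y ^ 2 / 4) + - ln y) by ring.
  assert (E3 : (e + 1) * ln y - y ^ 2 / 4 = (e * ln y - y ^ 2 / 4) + ln y) by ring.
  rewrite E1, E2, E3, !exp_plus, exp_Ropp, exp_ln by auto. field. lra.
Qed.

Lemma G_ex_derive c y : 0 < y -> ex_derive (G c) y.
Proof. intros Hy. eexists. apply G_derive; auto. Qed.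

Lemma G_cont c y : 0 < y -> continuous (G c) y.
Proof. intros Hy. apply (@ex_derive_continuous R_AbsRing R_NormedModule), G_ex_derive; auto. Qed.

Lemma G_ex_RInt c a b : 0 < a -> a <= b -> ex_RInt (G c) a b.
Proof.
  intros Ha Hab. apply (@ex_RInt_continuous R_CompleteNormedModule). intros z Hz.
  rewrite Rmin_left in Hz by lra. apply G_cont; lra.
Qed.

Lemma ln_lt_id y : 0 < y -> ln y < y.
Proof.
  intros Hy. destruct (Rle_lt_dec (ln y) 0) as [H|H]; [lra|].
  assert (Hn : ln y <> 0) by lra. pose proof (exp_ineq1 _ Hn). rewrite exp_ln in H0; lra.
Qed.

Lemma G_small0 e eps : 0 < e -> 0 < eps -> exists delta, 0 < delta /\ (forall y, 0 < y -> y < delta -> G e y < eps).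
Proof.
  intros He Heps. exists (exp (ln eps / e)). split; [apply exp_pos|].
  intros y Hy Hyd. unfold G.
  apply ln_increasing in Hyd; auto. rewrite ln_exp in Hyd.
  rewrite <- (exp_ln eps) by auto. apply exp_increasing.
  assert (e * ln y < ln eps).
  { apply Rmult_lt_compat_l with (r := e) in Hyd; auto.
    replace (e * (ln eps / e)) with (ln eps) in Hyd by (field; lra). lra. }
  pose proof (pow2_ge_0 y). lra.
Qed.

Lemma G_smallinf e eps : 0 < e -> 0 < eps -> exists M,
  forall y, M < y -> G e y < eps.
Proof.
  intros He Heps. exists (8 * e + 8 + Rabs (ln eps)).
  intros y Hy. pose proof (Rabs_pos (ln eps)). pose proof (Rle_abs (- ln eps)).
  rewrite Rabs_Ropp in H0.
  assert (Hy0 : 0 < y) by lra.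
  pose proof (ln_lt_id y Hy0).
  unfold G. rewrite <- (exp_ln eps) by auto. apply exp_increasing.
  assert (e * ln y <= e * y) by (apply Rmult_le_compat_l; lra).
  assert (e * y <= y ^ 2 / 8) by nra.
  assert (y <= y ^ 2 / 8) by nra.
  lra.
Qed.


Lemma RInt_lin2 (f g : R -> R) (al be a b : R) :
  ex_RInt f a b -> ex_RInt g a b ->
  RInt (fun y => al * f y + be * g y) a b = al * RInt f a b + be * RInt g a b.
Proof.
  intros Hf Hg. apply is_RInt_unique.
  apply (is_RInt_plus (fun y => al * f y) (fun y => be * g y)).
  - apply (is_RInt_scal f). apply RInt_correct_R; auto.
  - apply (is_RInt_scal g). apply RInt_correct_R; auto.
Qed.

Lemma G_boundary c a b : -1 < c -> 0 < a -> a <= b ->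
  RInt (G (c + 2)) a b = 2 * (c + 1) * RInt (G c) a b - 2 * (G (c + 1) b - G (c + 1) a).
Proof.
  intros Hc Ha Hab.
  assert (K : is_RInt (fun y => (c + 1) * G c y + (- / 2) * G (c + 2) y) a b
                (minus (G (c + 1) b) (G (c + 1) a))).
  { apply (is_RInt_derive (G (c + 1))).
    - intros x Hx. rewrite Rmin_left in Hx by lra.
      pose proof (G_derive (c + 1) x ltac:(lra)) as D.
      replace (c + 1 - 1) with c in D by ring. replace (c + 1 + 1) with (c + 2) in D by ring.
      cbv beta. replace ((c + 1) * G c x + - / 2 * G (c + 2) x) with ((c + 1) * G c x - / 2 * G (c + 2) x) by ring.
      exact D.
    - intros x Hx. rewrite Rmin_left in Hx by lra.
      apply (@ex_derive_continuous R_AbsRing R_NormedModule).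
      unfold G. auto_derive. lra. }
  apply (@is_RInt_unique R_CompleteNormedModule) in K.
  rewrite RInt_lin2 in K by (apply G_ex_RInt; lra).
  change (minus (G (c + 1) b) (G (c + 1) a)) with (G (c + 1) b - G (c + 1) a) in K.
  lra.
Qed.

Lemma impr_step c v : -1 < c -> impr (G c) v -> impr (G (c + 2)) (2 * (c + 1) * v).
Proof.
  intros Hc [Hi Hl]. split.
  - intros a b Ha Hab. apply G_ex_RInt; auto.
  - intros eps Heps.
    set (e := c + 1). assert (He : 0 < e) by (unfold e; lra).
    destruct (Hl (eps / (4 * e))) as [d1 [Hd1 [M1 HM1]]].
    { apply Rdiv_lt_0_compat; lra. }
    destruct (G_small0 e (eps / 8) He ltac:(lra)) as [d2 [Hd2 HD2]].
    destruct (G_smallinf e (eps / 8) He ltac:(lra)) as [M2 HM2].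
    exists (Rmin d1 d2). split; [apply Rmin_pos; lra|]. exists (Rmax M1 M2).
    intros a b Ha Had Hb Hab.
    pose proof (Rmin_l d1 d2). pose proof (Rmin_r d1 d2).
    pose proof (Rmax_l M1 M2). pose proof (Rmax_r M1 M2).
    rewrite G_boundary by auto. fold e.
    specialize (HM1 a b Ha ltac:(lra) ltac:(lra) Hab).
    specialize (HD2 a Ha ltac:(lra)). specialize (HM2 b ltac:(lra)).
    pose proof (G_pos e a). pose proof (G_pos e b).
    set (I := RInt (G c) a b) in *.
    replace (2 * e * I - 2 * (G e b - G e a) - 2 * e * v) with
      (2 * e * (I - v) + (- 2 * (G e b - G e a))) by ring.
    eapply Rle_lt_trans; [apply Rabs_triang|].
    rewrite Rabs_mult, Rabs_right by lra.
    assert (Rabs (-2 * (G e b - G e a)) <= 2 * (G e b + G e a)).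
    { apply Rabs_le; lra. }
    assert (2 * e * Rabs (I - v) < eps / 2).
    { replace (eps / 2) with (2 * e * (eps / (4 * e))) by (field; lra).
      apply Rmult_lt_compat_l; lra. }
    lra.
Qed.

Lemma RInt_Chasles_R (f : R -> R) a b c : ex_RInt f a b -> ex_RInt f b c ->
  RInt f a b + RInt f b c = RInt f a c.
Proof. intros H1 H2. apply (@RInt_Chasles R_CompleteNormedModule); auto. Qed.

Lemma exp_mono x y : x <= y -> exp x <= exp y.
Proof. intros H. destruct (Rle_lt_or_eq_dec _ _ H) as [H'|H']; [apply Rlt_le, exp_increasing; auto| subst; lra]. Qed.

Lemma G_bound c a b : 0 <= c -> 0 < a -> a <= 1 -> 1 <= b ->
  RInt (G c) a b <= 1 + exp ((c + 2) ^ 2).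
Proof.
  intros Hc Ha Ha1 Hb.
  rewrite <- (RInt_Chasles_R (G c) a 1 b) by (apply G_ex_RInt; lra).
  set (K := exp ((c + 2) ^ 2)).
  assert (P1 : RInt (G c) a 1 <= 1).
  { apply Rle_trans with (RInt (fun _ => 1) a 1).
    - apply RInt_le; auto. apply G_ex_RInt; lra. apply (@ex_RInt_const R_CompleteNormedModule).
      intros x Hx. unfold G. rewrite <- exp_0. apply exp_mono.
      assert (ln x <= 0) by (rewrite <- ln_1; apply ln_le; lra).
      pose proof (pow2_ge_0 x). nra.
    - rewrite (@is_RInt_unique R_CompleteNormedModule _ _ _ _ (is_RInt_const a 1 1)).
      change (scal (1 - a) 1) with ((1 - a) * 1). lra. }
  assert (D : is_RInt (fun y => K / (y * y)) 1 b (minus (- K / b) (- K / 1))).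
  { apply (is_RInt_derive (fun y => - K / y)).
    - intros x Hx. rewrite Rmin_left in Hx by lra. auto_derive. lra. field. lra.
    - intros x Hx. rewrite Rmin_left in Hx by lra.
      apply (@ex_derive_continuous R_AbsRing R_NormedModule). auto_derive. nra. }
  assert (P2 : RInt (G c) 1 b <= K - K / b).
  { apply (@is_RInt_unique R_CompleteNormedModule) in D.
    change (minus (- K / b) (- K / 1)) with (- K / b - - K / 1) in D.
    replace (K - K / b) with (- K / b - - K / 1) by (field; lra). rewrite <- D.
    apply RInt_le; auto. apply G_ex_RInt; lra.
    apply (@ex_RInt_continuous R_CompleteNormedModule). intros z Hz.
    rewrite Rmin_left in Hz by lra.
    apply (@ex_derive_continuous R_AbsRing R_NormedModule). auto_derive. nra.
    intros x Hx.
    assert (E : G c x * x * x = G (c + 2) x).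
    { rewrite G_mul, G_mul by lra. f_equal. ring. }
    assert (B : G (c + 2) x <= K).
    { unfold G, K. apply exp_mono. pose proof (ln_lt_id x ltac:(lra)).
      assert ((c + 2) * ln x <= (c + 2) * x) by (apply Rmult_le_compat_l; lra).
      pose proof (pow2_ge_0 ((c + 2) - x / 2)). nra. }
    apply Rmult_le_reg_r with (x * x). nra.
    replace (K / (x * x) * (x * x)) with K by (field; lra). lra. }
  assert (0 <= K / b). { unfold K. apply Rle_trans with 0; [lra|]. apply Rlt_le, Rdiv_lt_0_compat; [apply exp_pos|lra]. }
  lra.
Qed.

Lemma impr_exists c : 0 <= c -> exists v, impr (G c) v.
Proof.
  intros Hc.
  set (E := fun v => exists a b, 0 < a /\ a <= 1 /\ 1 <= b /\ v = RInt (G c) a b).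
  assert (Hb : bound E).
  { exists (1 + exp ((c + 2) ^ 2)). intros v [a [b [H1 [H2 [H3 ->]]]]]. apply G_bound; auto. }
  assert (Hne : exists v, E v) by (exists (RInt (G c) 1 1); exists 1, 1; repeat split; lra).
  destruct (completeness E Hb Hne) as [m [Hub Hlub]].
  exists m. split.
  - intros a b Ha Hab. apply G_ex_RInt; auto.
  - intros eps Heps.
    destruct (classic (exists v, E v /\ m - eps < v)) as [[v [[a0 [b0 [Ha0 [Ha01 [Hb0 ->]]]]] Hv]]|Hno].
    2:{ exfalso. assert (m <= m - eps); [|lra]. apply Hlub. intros v Ev.
        destruct (Rle_lt_dec v (m - eps)) as [|Hlt]; auto. exfalso; apply Hno; eauto. }
    exists a0. split; auto. exists b0. intros a b Ha Had Hbb Hab.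
    assert (Ch : RInt (G c) a b = RInt (G c) a a0 + RInt (G c) a0 b0 + RInt (G c) b0 b).
    { rewrite RInt_Chasles_R, RInt_Chasles_R; auto; apply G_ex_RInt; lra. }
    assert (0 <= RInt (G c) a a0).
    { apply RInt_ge_0; [lra| apply G_ex_RInt; lra |]. intros; apply Rlt_le, G_pos. }
    assert (0 <= RInt (G c) b0 b).
    { apply RInt_ge_0; [lra| apply G_ex_RInt; lra |]. intros; apply Rlt_le, G_pos. }
    assert (RInt (G c) a b <= m).
    { apply Hub. exists a, b. repeat split; lra. }
    apply Rabs_def1; lra.
Qed.

Lemma lag_sq a n x :
  laguerre n a x * laguerre n a x =
  sum_f_R0 (fun i => sum_f_R0 (fun k => cc a n i * cc a n k * x ^ (i + k)) n) n.
Proof.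
  change (laguerre n a x) with (sum_f_R0 (fun k => cc a n k * x ^ k) n).
  rewrite scal_sum. apply sum_eq; intros i _.
  cbv beta. rewrite scal_sum. apply sum_eq; intros k _. rewrite pow_add. ring.
Qed.

Lemma sum_mult_r (A : nat -> R) N x : sum_f_R0 A N * x = sum_f_R0 (fun i => A i * x) N.
Proof. rewrite Rmult_comm, scal_sum. reflexivity. Qed.

Lemma core d y m : (1 <= d)%nat -> 0 < y ->
  Rpower y (- gam d) * Rpower y (- gam d) * (y ^ (d - 1) * exp (- y ^ 2 / 4)) * (y ^ 2) ^ m
  = G (omega d + 1 + 2 * INR m) y.
Proof.
  intros Hd Hy.
  rewrite <- (Rpower_pow (d - 1) y Hy).
  assert (Hy2 : 0 < y ^ 2) by (apply pow_lt; auto).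
  rewrite <- (Rpower_pow m (y ^ 2) Hy2).
  unfold Rpower, G. rewrite ln_pow by auto.
  rewrite <- !exp_plus. f_equal.
  rewrite minus_INR by auto. unfold gam. simpl INR. field.
Qed.

Lemma core' c y : 0 < y -> G (c + 2) y / (y * y) = G c y.
Proof.
  intros Hy. assert (E : G c y * y * y = G (c + 2) y).
  { rewrite G_mul, G_mul by lra. f_equal. ring. }
  rewrite <- E. field. lra.
Qed.

Theorem mainTheorem5 (d : nat) (Hd : (7 <= d)%nat) (n : nat) (N : R)
  (HN : 0 < N) (Hnorm : Hnorm_sq d (phi d n N) 1) :
  exists l, Hnorm_sq d (fun y => phi d n N y / y) l /\
            sqrt l <= 4 * INR n / omega d + 1.
Proof.
  assert (Hw1 : 1 <= omega d).
  { unfold omega. rewrite <- sqrt_1. apply sqrt_le_1_alt.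
    assert (7 <= INR d) by (apply le_INR in Hd; simpl in Hd; lra). nra. }
  set (w := omega d) in *. set (a := w / 2).
  destruct (impr_exists (w - 1) ltac:(lra)) as [I0 HI0].
  assert (Hval : forall m, impr (G (w - 1 + 2 * INR m)) (I0 * 4 ^ m * poch a m)).
  { induction m as [|m IH].
    - simpl. replace (w - 1 + 2 * 0) with (w - 1) by ring.
      replace (I0 * 1 * 1) with I0 by ring. auto.
    - replace (w - 1 + 2 * INR (S m)) with ((w - 1 + 2 * INR m) + 2) by (rewrite S_INR; ring).
      replace (I0 * 4 ^ S m * poch a (S m)) with
        (2 * ((w - 1 + 2 * INR m) + 1) * (I0 * 4 ^ m * poch a m)).
      2:{ simpl poch. simpl pow. unfold a. field. }
      apply impr_step; auto. pose proof (pos_INR m). lra. }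
  set (coef := fun i k => N ^ 2 * cc a n i * cc a n k * (/ 4) ^ (i + k)).
  assert (Hd1 : (1 <= d)%nat) by lia.
  assert (PA : forall y, 0 < y -> phi d n N y ^ 2 * rho d y =
     sum_f_R0 (fun i => sum_f_R0 (fun k => coef i k * G (w - 1 + 2 * INR (S (i + k))) y) n) n).
  { intros y Hy. unfold phi, rho. fold w. fold a.
    replace ((N * Rpower y (- gam d) * laguerre n a (y ^ 2 / 4)) ^ 2 *
             (y ^ (d - 1) * exp (- y ^ 2 / 4))) with
      (N ^ 2 * (laguerre n a (y ^ 2 / 4) * laguerre n a (y ^ 2 / 4)) *
       (Rpower y (- gam d) * Rpower y (- gam d) * (y ^ (d - 1) * exp (- y ^ 2 / 4)))) by ring.
    rewrite lag_sq, scal_sum, sum_mult_r.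
    apply sum_eq; intros i _. rewrite !sum_mult_r.
    apply sum_eq; intros k _. unfold coef.
    replace (w - 1 + 2 * INR (S (i + k))) with (omega d + 1 + 2 * INR (i + k)) by (rewrite S_INR; unfold w; ring).
    rewrite <- core by auto. unfold Rdiv. rewrite Rpow_mult_distr. ring. }
  assert (PB : forall y, 0 < y -> (phi d n N y / y) ^ 2 * rho d y =
     sum_f_R0 (fun i => sum_f_R0 (fun k => coef i k * G (w - 1 + 2 * INR (i + k)) y) n) n).
  { intros y Hy.
    assert (EE : forall p r, (p / y) ^ 2 * r = (p ^ 2 * r) * / (y * y)) by (intros; field; lra).
    rewrite EE.
    rewrite PA by auto. rewrite sum_mult_r. apply sum_eq; intros i _.
    rewrite sum_mult_r. apply sum_eq; intros k _.
    replace (w - 1 + 2 * INR (S (i + k))) with ((w - 1 + 2 * INR (i + k)) + 2) by (rewrite S_INR; ring).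
    rewrite <- (core' (w - 1 + 2 * INR (i + k)) y Hy). unfold Rdiv. ring. }
  set (V1 := sum_f_R0 (fun i => sum_f_R0 (fun k => coef i k * (I0 * 4 ^ (S (i + k)) * poch a (S (i + k)))) n) n).
  set (V0 := sum_f_R0 (fun i => sum_f_R0 (fun k => coef i k * (I0 * 4 ^ (i + k) * poch a (i + k))) n) n).
  assert (HA : impr (fun y => phi d n N y ^ 2 * rho d y) V1).
  { apply (impr_ext (fun y => sum_f_R0 (fun i => sum_f_R0 (fun k => coef i k * G (w - 1 + 2 * INR (S (i + k))) y) n) n)).
    { intros y Hy. symmetry. apply PA; auto. }
    apply (impr_sum (fun i y => sum_f_R0 (fun k => coef i k * G (w - 1 + 2 * INR (S (i + k))) y) n)).
    intros i _. apply (impr_sum (fun k y => coef i k * G (w - 1 + 2 * INR (S (i + k))) y)).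
    intros k _. apply impr_scal. apply Hval. }
  assert (HB : impr (fun y => (phi d n N y / y) ^ 2 * rho d y) V0).
  { apply (impr_ext (fun y => sum_f_R0 (fun i => sum_f_R0 (fun k => coef i k * G (w - 1 + 2 * INR (i + k)) y) n) n)).
    { intros y Hy. symmetry. apply PB; auto. }
    apply (impr_sum (fun i y => sum_f_R0 (fun k => coef i k * G (w - 1 + 2 * INR (i + k)) y) n)).
    intros i _. apply (impr_sum (fun k y => coef i k * G (w - 1 + 2 * INR (i + k)) y)).
    intros k _. apply impr_scal. apply Hval. }
  assert (H1 : V1 = 1).
  { apply (impr_unique _ _ _ HA). apply improper_impr. exact Hnorm. }
  assert (V1E : V1 = 4 * N ^ 2 * I0 *
     sum_f_R0 (fun i => sum_f_R0 (fun k => cc a n i * cc a n k * poch a (S (i + k))) n) n).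
  { unfold V1. rewrite <- scal_sum_l. apply sum_eq; intros i _.
    rewrite <- scal_sum_l. apply sum_eq; intros k _. unfold coef.
    rewrite pow_inv. rewrite <- (tech_pow_Rmult 4 (i + k)).
    assert (Hq : 4 ^ (i + k) <> 0) by (apply pow_nonzero; lra).
    generalize (4 ^ (i + k)) Hq. intros q Hq'. field. auto. }
  assert (V0E : V0 = N ^ 2 * I0 *
     sum_f_R0 (fun i => sum_f_R0 (fun k => cc a n i * cc a n k * poch a (i + k)) n) n).
  { unfold V0. rewrite <- scal_sum_l. apply sum_eq; intros i _.
    rewrite <- scal_sum_l. apply sum_eq; intros k _. unfold coef.
    rewrite pow_inv.
    assert (Hq : 4 ^ (i + k) <> 0) by (apply pow_nonzero; lra).
    generalize (4 ^ (i + k)) Hq. intros q Hq'. field. auto. }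
  rewrite lag_identity in V1E.
  assert (HV0 : V0 = / (2 * w)).
  { assert (2 * w * V0 = 1). { rewrite <- H1, V0E, V1E. unfold a. field. }
    apply (Rmult_eq_reg_l (2 * w)); [rewrite H; field; lra | lra]. }
  exists V0. split.
  - apply impr_improper. exact HB.
  - assert (V0 <= 1).
    { rewrite HV0. apply Rle_trans with (/ 2); [|lra]. apply Rinv_le_contravar; lra. }
    apply Rle_trans with 1.
    + rewrite <- sqrt_1. apply sqrt_le_1_alt. auto.
    + assert (0 <= 4 * INR n / w).
      { apply Rmult_le_pos; [pose proof (pos_INR n); lra | apply Rlt_le, Rinv_0_lt_compat; lra]. }
      lra.
Qed.
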